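(* Let $(\Omega,\mathcal{F},\mathbb{P})$ be a nonatomic probability space and let $(\mathcal{X},\mathcal{X}^\ast)$ be a pair of law-invariant vector subspaces of $L^1$, each containing $L^\infty$, such that $XY\in L^1$ for all $X\in\mathcal{X}$ and $Y\in\mathcal{X}^\ast$. Let $\varphi:\mathcal{X}\to(-\infty,\infty]$ be proper, convex and $\sigma(\mathcal{X},\mathcal{X}^\ast)$-lower semicontinuous, and let $\mathcal{S}\subset\mathcal{X}$ be such that $\mathrm{span}(\mathcal{S})$ is $\sigma(\mathcal{X},\mathcal{X}^\ast)$-dense in $\mathcal{X}$. If $\varphi$ is affine along every element of $\mathcal{S}$, then $\varphi$ is affine on $\mathcal{X}$ and there exists a unique $Y\in\mathcal{X}^\ast$ such that $\varphi(X)=\mathbb{E}_{\mathbb{P}}[XY]+\varphi(0)$ for every $X\in\mathcal{X}$.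
   Context: $L^0$ denotes the space of real random variables on $(\Omega,\mathcal{F},\mathbb{P})$ modulo almost-sure equality. For $X,Y\in L^0$, $X\sim Y$ means same law under $\mathbb{P}$; a set $\mathcal{S}\subset L^0$ is law invariant if $X\in\mathcal{S}$ whenever $X\in L^0$ and $X\sim Y$ for some $Y\in\mathcal{S}$. $\sigma(\mathcal{X},\mathcal{X}^\ast)$ is the weakest linear topology on $\mathcal{X}$ for which $X\mapsto\mathbb{E}_{\mathbb{P}}[XY]$ is continuous for every $Y\in\mathcal{X}^\ast$. $\mathrm{span}(\mathcal{S})$ is the smallest linear subspace containing $\mathcal{S}$. For $\varphi:\mathcal{X}\to(-\infty,\infty]$: $\mathrm{dom}(\varphi)=\{X:\varphi(X)<\infty\}$; proper means $\mathrm{dom}(\varphi)\neq\emptyset$; $\sigma(\mathcal{X},\mathcal{X}^\ast)$-lower semicontinuous means $\varphi(X)\le\liminf_\alpha\varphi(X_\alpha)$ for every net $X_\alpha\to X$ in $\sigma(\mathcal{X},\mathcal{X}^\ast)$. $\varphi$ is affine along an element $Z$ if $mZ\in\mathrm{dom}(\varphi)$ for all $m\in\mathbb{R}$ and $m\mapsto\varphi(mZ)-\varphi(0)$ is linear, i.e. $\varphi(mZ)=am+\varphi(0)$ for some $a\in\mathbb{R}$; $\varphi$ is affine on $\mathcal{X}$ if $\varphi$ is finite on $\mathcal{X}$ and $X\mapsto\varphi(X)-\varphi(0)$ is linear on $\mathcal{X}$. *)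

(* Defs.v *)
From HB Require Import structures.
From mathcomp Require Import all_boot all_order all_algebra.
From mathcomp Require Import all_classical all_reals all_analysis.
Set Implicit Arguments. Unset Strict Implicit. Unset Printing Implicit Defensive.
Import Order.TTheory GRing.Theory Num.Theory.
Local Open Scope classical_set_scope.
Local Open Scope ring_scope.

(* Random variables are represented by functions T -> R; an element of L^0 is
   a measurable function, and all notions below are invariant under a.s.
   equality (sets are law invariant, hence closed under a.s. equality). *)

Section Defs.
Context {d : measure_display} {T : measurableType d} {R : realType}.
Variable P : probability T R.

Definition L0 (X : T -> R) : Prop := measurable_fun setT X.

Definition L1 (X : T -> R) : Prop :=
  measurable_fun setT X /\ P.-integrable setT (EFin \o X).

Definition Linf (X : T -> R) : Prop :=
  measurable_fun setT X /\ exists M : R, {ae P, forall t, `|X t| <= M}.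

(* expectation (real-valued; meaningful for integrable functions) *)
Definition Ex (X : T -> R) : R := fine (\int[P]_t (X t)%:E).

Definition as_eq (X Y : T -> R) : Prop := {ae P, forall t, X t = Y t}.

Definition same_law (X Y : T -> R) : Prop :=
  forall B : set R, measurable B -> P (X @^-1` B) = P (Y @^-1` B).

Definition law_invariant (S : set (T -> R)) : Prop :=
  forall X Y, L0 X -> S Y -> same_law X Y -> S X.

Definition nonatomic : Prop :=
  forall A : set T, measurable A -> (0 < P A)%E ->
    exists2 B : set T, measurable B &
      [/\ B `<=` A, (0 < P B)%E & (P B < P A)%E].

Definition vector_subspace (S : set (T -> R)) : Prop :=
  [/\ S (fun=> 0),
      (forall X Y, S X -> S Y -> S (fun t => X t + Y t)) &
      (forall (a : R) X, S X -> S (fun t => a * X t))].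

Inductive lin_span (S : set (T -> R)) : (T -> R) -> Prop :=
| lin_span0 : lin_span S (fun=> 0)
| lin_span_lin : forall (a : R) X Z, S X -> lin_span S Z ->
    lin_span S (fun t => a * X t + Z t).

End Defs.

Definition directed (I : Type) (le : I -> I -> Prop) : Prop :=
  [/\ inhabited I, (forall i, le i i),
      (forall i j k, le i j -> le j k -> le i k) &
      (forall i j, exists k, le i k /\ le j k)].

Definition net_cvg {R : realType} (I : Type) (le : I -> I -> Prop)
  (u : I -> R) (l : R) : Prop :=
  forall e : R, 0 < e -> exists i0, forall i, le i0 i -> `|u i - l| < e.

Definition net_liminf {R : realType} (I : Type) (le : I -> I -> Prop)
  (u : I -> \bar R) : \bar R :=
  ereal_sup (range (fun i => ereal_inf (u @` (le i)))).

Section Defs2.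
Context {d : measure_display} {T : measurableType d} {R : realType}.
Variable P : probability T R.

Definition weak_net_cvg (Xs : set (T -> R)) (I : Type) (le : I -> I -> Prop)
  (x : I -> (T -> R)) (X : T -> R) : Prop :=
  forall Y, Xs Y -> net_cvg le (fun i => Ex P (fun t => x i t * Y t))
                                (Ex P (fun t => X t * Y t)).

Definition weak_lsc (X Xs : set (T -> R)) (phi : (T -> R) -> \bar R) : Prop :=
  forall (I : Type) (le : I -> I -> Prop) (x : I -> (T -> R)) (Z : T -> R),
    directed le -> (forall i, X (x i)) -> X Z ->
    weak_net_cvg Xs le x Z -> (phi Z <= net_liminf le (fun i => phi (x i)))%E.

Definition weak_dense (X Xs : set (T -> R)) (D : set (T -> R)) : Prop :=
  forall Z, X Z -> exists (I : Type) (le : I -> I -> Prop) (x : I -> (T -> R)),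
    [/\ directed le, (forall i, D (x i)) & weak_net_cvg Xs le x Z].

(* phi : X -> (-oo, +oo], respecting a.s. equality (phi is defined on classes) *)
Definition functional_on (X : set (T -> R)) (phi : (T -> R) -> \bar R) : Prop :=
  (forall Z, X Z -> phi Z != -oo%E) /\
  (forall Z Z', X Z -> X Z' -> as_eq P Z Z' -> phi Z = phi Z').

Definition proper_on (X : set (T -> R)) (phi : (T -> R) -> \bar R) : Prop :=
  exists2 Z, X Z & (phi Z < +oo)%E.

Definition convex_on (X : set (T -> R)) (phi : (T -> R) -> \bar R) : Prop :=
  forall Z Z' (l : R), X Z -> X Z' -> 0 <= l <= 1 ->
    (phi (fun t => (l * Z t + (1 - l) * Z' t)%R)
       <= l%:E * phi Z + (1 - l)%R%:E * phi Z')%E.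

Definition affine_along (phi : (T -> R) -> \bar R) (Z : T -> R) : Prop :=
  (forall m : R, (phi (fun t => (m * Z t)%R) < +oo)%E) /\
  exists a : R, forall m : R, phi (fun t => (m * Z t)%R) = ((a * m)%R%:E + phi (fun=> 0%R))%E.

Definition affine_on (X : set (T -> R)) (phi : (T -> R) -> \bar R) : Prop :=
  (forall Z, X Z -> phi Z \is a fin_num) /\
  (forall Z Z' (a b : R), X Z -> X Z' ->
     fine (phi (fun t => a * Z t + b * Z' t)) - fine (phi (fun=> 0)) =
     a * (fine (phi Z) - fine (phi (fun=> 0)))
     + b * (fine (phi Z') - fine (phi (fun=> 0)))).

End Defs2.

(* Main.v *)
Require Import Defs.
From HB Require Import structures.
From mathcomp Require Import all_boot all_order all_algebra.
From mathcomp Require Import all_classical all_reals all_analysis.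
From mathcomp Require Import ring lra.
Import Order.TTheory GRing.Theory Num.Theory.
Local Open Scope classical_set_scope.
Local Open Scope ring_scope.
Section Aux.
Context {d : measure_display} {T : measurableType d} {R : realType}.
Variable P : probability T R.

Lemma orth0 (W : T -> R) : L1 P W ->
  (forall Z, Linf P Z -> Ex P (fun t => Z t * W t) = 0) -> as_eq P W (fun=> 0).
Proof.
move=> [mW iW] H.
pose Z := fun t => if 0 <= W t then 1 else -1 : R.
have LZ : Linf P Z.
  split.
    apply: measurable_fun_ifT => //.
    by apply: measurable_realfun.measurable_fun_ler.
  exists 1; apply: aeW => t; rewrite /Z; case: ifP => _; by rewrite ?normrN normr1.
have := H Z LZ.
have -> : (fun t => Z t * W t) = (fun t => `|W t|).
  apply: funext => t; rewrite /Z; case: ifPn => h.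
    by rewrite mul1r ger0_norm.
  by rewrite mulN1r ltr0_norm // ltNge.
rewrite /Ex => h0.
have iA : P.-integrable setT (fun t => (`|W t|)%:E).
  exact: (integrable_norm iW).
have h1 : (\int[P]_t (`|W t|)%:E)%E = 0%E.
  by have := fineK (integrable_fin_num _ iA); rewrite h0 => <-.
have := (ae_eq_integral_abs _ measurableT ((measurable_realfun.measurable_EFinP _ _).2 mW)).1 h1.
apply: filterS => t /= h /=.
exact: (EFin_inj (h I)).
Qed.


Lemma Ex_lin (f g : T -> R) (a : R) :
  P.-integrable setT (EFin \o f) -> P.-integrable setT (EFin \o g) ->
  Ex P (fun t => a * f t + g t) = a * Ex P f + Ex P g.
Proof.
move=> If Ig; rewrite /Ex.
under eq_integral do rewrite EFinD EFinM.
rewrite integralD //; last exact: integrableZl.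
rewrite integralZl // fineD ?fineM //;
  by [apply: integrable_fin_num | rewrite fin_numM // integrable_fin_num].
Qed.

Lemma Ex_scale (f : T -> R) (a : R) :
  P.-integrable setT (EFin \o f) -> Ex P (fun t => a * f t) = a * Ex P f.
Proof.
move=> If; rewrite /Ex.
under eq_integral do rewrite EFinM.
by rewrite integralZl // fineM // integrable_fin_num.
Qed.

Lemma Ex0 : Ex P (fun=> 0) = 0.
Proof. by rewrite /Ex integral0. Qed.

Lemma sum_in (Xs : set (T -> R)) (G : nat -> T -> R) (c : nat -> R) m :
  vector_subspace Xs -> (forall i, Xs (G i)) ->
  Xs (fun t => \sum_(i < m) c i * G i t).
Proof.
move=> [X0 XD XZ] HG; elim: m => [|m IH].
  by rewrite (_ : (fun t => _) = fun=> 0) //; apply: funext => t; rewrite big_ord0.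
rewrite (_ : (fun t => _) = (fun t => (fun t => \sum_(i < m) c i * G i t) t + (fun t => c m * G m t) t)).
  by apply: XD => //; apply: XZ.
by apply: funext => t; rewrite big_ord_recr.
Qed.

Lemma Ex_sum (x : T -> R) (G : nat -> T -> R) (c : nat -> R) m :
  (forall i, P.-integrable setT (EFin \o (fun t => x t * G i t))) ->
  (forall m', P.-integrable setT (EFin \o (fun t => x t * \sum_(i < m') c i * G i t))) ->
  Ex P (fun t => x t * \sum_(i < m) c i * G i t) = \sum_(i < m) c i * Ex P (fun t => x t * G i t).
Proof.
move=> HG HS; elim: m => [|m IH].
  rewrite big_ord0 (_ : (fun t => _) = fun=> 0) ?Ex0 //.
  by apply: funext => t; rewrite big_ord0 mulr0.
rewrite big_ord_recr /= -IH.
rewrite (_ : (fun t => _) = (fun t => c m * (x t * G m t) + x t * \sum_(i < m) c i * G i t)).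
  by rewrite Ex_lin // addrC.
by apply: funext => t; rewrite big_ord_recr /= mulrDr addrC mulrCA.
Qed.

End Aux.
Section LinAlg.
Variables (R : realType) (U : Type) (zero : U) (comb : R -> U -> U -> U).

Definition lin_on (V : U -> Prop) (f : U -> R) :=
  f zero = 0 /\ forall a x z, V x -> V z -> f (comb a x z) = a * f x + f z.

Lemma linalg n : forall (fs : nat -> U -> R) (V : U -> Prop) (l : U -> R),
  V zero -> (forall a x z, V x -> V z -> V (comb a x z)) ->
  (forall i, lin_on V (fs i)) -> lin_on V l ->
  (forall x, V x -> (forall i, (i < n)%N -> fs i x = 0) -> l x = 0) ->
  exists c : nat -> R, forall x, V x -> l x = \sum_(i < n) c i * fs i x.
Proof.
elim: n => [|n IH] fs V l V0 Vc Lf Ll Hk.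
  by exists (fun=> 0) => x Vx; rewrite big_ord0; apply: Hk.
pose V' x := V x /\ fs n x = 0.
have V'0 : V' zero by split => //; case: (Lf n).
have V'c : forall a x z, V' x -> V' z -> V' (comb a x z).
  move=> a x z [Vx fx] [Vz fz]; split; first exact: Vc.
  by case: (Lf n) => _ ->; rewrite // fx fz mulr0 addr0.
have Lf' : forall i, lin_on V' (fs i).
  by move=> i; case: (Lf i) => h0 h1; split => // a x z [? _] [? _]; apply: h1.
have Ll' : lin_on V' l.
  by case: Ll => h0 h1; split => // a x z [? _] [? _]; apply: h1.
have Hk' : forall x, V' x -> (forall i, (i < n)%N -> fs i x = 0) -> l x = 0.
  move=> x [Vx fx] H; apply: Hk => // i; rewrite ltnS leq_eqVlt.
  by case/orP => [/eqP -> //|]; apply: H.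
have [c Hc] := IH fs V' l V'0 V'c Lf' Ll' Hk'.
pose g x := l x - \sum_(i < n) c i * fs i x.
have gl : forall a x z, V x -> V z -> g (comb a x z) = a * g x + g z.
  move=> a x z Vx Vz; rewrite /g; case: Ll => _ ->//.
  under eq_bigr => i _ do (case: (Lf i) => _ ->; rewrite //).
  under eq_bigr => i _ do rewrite mulrDr mulrCA.
  rewrite big_split /= -mulr_sumr.
  lra.
have g0 : forall x, V' x -> g x = 0 by move=> x Vx; rewrite /g -Hc // subrr.
have [cn Hcn] : exists cn, forall x, V x -> g x = cn * fs n x.
  have [[v0 [Vv0 nz]]|nov] := pselect (exists v0, V v0 /\ fs n v0 != 0).
    exists (g v0 / fs n v0) => x Vx.
    pose k := - (fs n x / fs n v0).
    have Vw : V' (comb k v0 x).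
      split; first exact: Vc.
      case: (Lf n) => _ ->//; rewrite /k mulNr divfK //; lra.
    have := g0 _ Vw; rewrite gl // /k => h.
    apply/eqP; rewrite -subr_eq0; apply/eqP; rewrite -h.
    by field.
  exists 0 => x Vx; rewrite mul0r; apply: g0; split => //.
  by apply/eqP; apply: contra_notT nov => h; exists x.
exists (fun i => if i == n then cn else c i) => x Vx.
rewrite big_ord_recr /= eqxx.
have -> : \sum_(i < n) (if widen_ord (leqnSn n) i == n :> nat then cn else c i) * fs i x
   = \sum_(i < n) c i * fs i x.
  by apply: eq_bigr => i _; rewrite /= ltn_eqF.
by rewrite -Hcn //= /g; lra.
Qed.
End LinAlg.
Lemma liminf_le_cvg (R : realType) (I : Type) (le : I -> I -> Prop) (u : I -> R) l :
  directed le -> net_cvg le u l -> (net_liminf le (fun i => (u i)%:E) <= l%:E)%E.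
Proof.
move=> [_ _ _ dir] cv; apply/lee_addgt0Pr => e e0.
apply: ge_ereal_sup => _ [i _ <-].
have [i0 Hi0] := cv e e0.
have [k [hik hi0k]] := dir i i0.
apply: (@le_trans _ _ (u k)%:E).
  by apply: ereal_inf_lbound; exists k.
rewrite -EFinD lee_fin.
have := Hi0 k hi0k; rewrite ltr_norml => /andP[_ h]; lra.
Qed.

Lemma liminf_le_ub (R : realType) (I : Type) (le : I -> I -> Prop) (v : I -> \bar R) c :
  (forall i, le i i) -> (forall i, (v i <= c)%E) -> (net_liminf le v <= c)%E.
Proof.
move=> refl H; apply: ge_ereal_sup => _ [i _ <-].
apply: le_trans (H i); apply: ereal_inf_lbound; exists i => //; exact: refl.
Qed.

Lemma In_nth_ex (A : Type) (d : A) (s : seq A) y :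
  List.In y s -> exists i, (i < size s)%N /\ nth d s i = y.
Proof.
elim: s => //= a s IH [->|/IH [i [hi <-]]]; first by exists 0%N.
by exists i.+1.
Qed.

Theorem corollary3p6 (d : measure_display) (T : measurableType d)
  (R : realType) (P : probability T R)
  (X Xs : set (T -> R)) (phi : (T -> R) -> \bar R) (S : set (T -> R)) :
  nonatomic P ->
  vector_subspace X -> vector_subspace Xs ->
  law_invariant P X -> law_invariant P Xs ->
  (forall Z, X Z -> L1 P Z) -> (forall Y, Xs Y -> L1 P Y) ->
  (forall Z, Linf P Z -> X Z) -> (forall Y, Linf P Y -> Xs Y) ->
  (forall Z Y, X Z -> Xs Y -> L1 P (fun t => Z t * Y t)) ->
  functional_on P X phi -> proper_on X phi -> convex_on X phi ->
  weak_lsc P X Xs phi ->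
  S `<=` X -> weak_dense P X Xs (lin_span S) ->
  (forall Z, S Z -> affine_along phi Z) ->
  affine_on X phi /\
  exists2 Y, Xs Y &
    (forall Z, X Z ->
       phi Z = (Ex P (fun t => Z t * Y t) + fine (phi (fun=> 0)))%:E) /\
    (forall Y', Xs Y' ->
       (forall Z, X Z ->
          phi Z = (Ex P (fun t => Z t * Y' t) + fine (phi (fun=> 0)))%:E) ->
       as_eq P Y' Y).
Proof.
move=> _ VX VXs _ _ XL1 XsL1 LinfX LinfXs Lprod [phiN phiae] [Z0 XZ0 phiZ0]
  cvx lsc SX dense affS.
have [X0 XD XZ] := VX; have [Xs0 XsD XsZ] := VXs.
set phi0 := phi (fun=> 0).
have Xc : forall a x z, X x -> X z -> X (fun t => a * x t + z t).
  by move=> a x z Xx Xz; apply: (XD (fun t => a * x t) z) => //; apply: XZ.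
have spanX : forall x, lin_span S x -> X x.
  by move=> x; elim => // a x' z Sx _ Xz; apply: Xc => //; apply: SX.
have spanc : forall a x z, lin_span S x -> lin_span S z ->
    lin_span S (fun t => a * x t + z t).
  move=> a x z hx; elim: hx z => [|b s w Ss _ IH] z hz.
    rewrite (_ : (fun t => a * 0 + z t) = z) //.
    by apply: funext => t; rewrite mulr0 add0r.
  rewrite (_ : (fun t => a * (b * s t + w t) + z t) =
     (fun t => (a * b) * s t + (fun t => a * w t + z t) t)).
    by apply: lin_span_lin => //; apply: IH.
  by apply: funext => t /=; ring.
have phi0fin : phi0 \is a fin_num.
  rewrite fin_numE phiN //=.
  have [[s Ss]|noS] := pselect (exists s, S s).
    have [h _] := affS s Ss; have := h 0.
    rewrite (_ : (fun t => 0 * s t) = fun=> 0); last first.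
      by apply: funext => t; rewrite mul0r.
    by rewrite lt_neqAle => /andP[].
  have span0 : forall x, lin_span S x -> x = fun=> 0.
    by move=> x; elim => // a x' z Sx; exfalso; apply: noS; exists x'.
  have [I [le [x [[_ refl _ _] hx cvx']]]] := dense Z0 XZ0.
  have orth : forall Y, Xs Y -> Ex P (fun t => Z0 t * Y t) = 0.
    move=> Y XsY; have H := cvx' Y XsY.
    apply/eqP; apply/negPn/negP => nz.
    have [j Hj] := H _ (eqbRL (normr_gt0 _) nz).
    have := Hj j (refl j); rewrite (span0 _ (hx j)).
    rewrite (_ : (fun t => 0 * Y t) = fun=> 0); last first.
      by apply: funext => t; rewrite mul0r.
    by rewrite Ex0 sub0r normrN ltxx.
  have ae0 : as_eq P Z0 (fun=> 0).
    apply: orth0; first exact: XL1.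
    move=> Z LZ; rewrite (_ : (fun t => Z t * Z0 t) = fun t => Z0 t * Z t).
      by apply: orth; apply: LinfXs.
    by apply: funext => t; rewrite mulrC.
  have := phiae _ _ XZ0 X0 ae0; rewrite -/phi0 => <-.
  by move: phiZ0; rewrite lt_neqAle => /andP[].
set p0 := fine phi0.
have ephi0 : phi0 = p0%:E by rewrite fineK.
pose affc x al := forall m, phi (fun t => m * x t) = (al * m + p0)%:E.
have half01 : (0 <= (2^-1 : R) <= 1) by apply/andP; split; lra.
have comb_aff : forall b x z al be, X x -> X z -> affc x al -> affc z be ->
    affc (fun t => b * x t + z t) (b * al + be).
  move=> b x z al be Xx Xz hx hz.
  set w := fun t => b * x t + z t.
  have Xw : forall m, X (fun t => m * w t) by move=> m; apply: XZ; apply: Xc.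
  have up : forall m, (phi (fun t => (m * w t)%R) <= ((b * al + be) * m + p0)%:E)%E.
    move=> m.
    have -> : (fun t => m * w t) =
      (fun t => 2^-1 * ((2 * m * b) * x t) + (1 - 2^-1) * ((2 * m) * z t)).
      by apply: funext => t; rewrite /w; field.
    apply: le_trans (cvx _ _ _ (XZ _ _ Xx) (XZ _ _ Xz) half01) _.
    rewrite hx hz -!EFinM -EFinD lee_fin.
    rewrite le_eqVlt; apply/orP; left; by apply/eqP; field.
  move=> m; have Hm := up m; have Hnm := up (-m).
  have := cvx _ _ _ (Xw m) (Xw (-m)) half01.
  rewrite (_ : (fun t => 2^-1 * (m * w t) + (1 - 2^-1) * (- m * w t)) = fun=> 0);
    last by apply: funext => t; field.
  rewrite -/phi0 ephi0.
  case E1: (phi (fun t => m * w t)) Hm => [r| |] Hm; last first.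
  - by move: (phiN _ (Xw m)); rewrite E1.
  - by [].
  case E2: (phi (fun t => - m * w t)) Hnm => [s| |] Hnm; last first.
  - by move: (phiN _ (Xw (-m))); rewrite E2.
  - by [].
  rewrite -!EFinM -EFinD !lee_fin => H.
  rewrite lee_fin in Hm Hnm.
  congr EFin; apply/eqP; rewrite eq_le Hm /=.
  move: Hnm H Hm; rewrite mulrN lee_fin.
  set K := (b * al + be) * m; lra.
have affspan : forall x, lin_span S x -> exists al, affc x al.
  move=> x; elim => [|b s w Ss hw [be hbe]].
    exists 0 => m; rewrite mul0r add0r -ephi0 /phi0.
    by congr phi; apply: funext => t; rewrite mulr0.
  have [_ [a ha]] := affS s Ss.
  exists (b * a + be); apply: comb_aff => //; [exact: SX | exact: spanX | ].
  by move=> m; rewrite ha -/phi0 ephi0.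
pose L x := fine (phi x) - p0.
have e1 : forall x : T -> R, (fun t => 1 * x t) = x.
  by move=> x; apply: funext => t; rewrite mul1r.
have affL : forall x, lin_span S x -> affc x (L x).
  move=> x hx; have [al hal] := affspan x hx.
  suff -> : L x = al by [].
  by have := hal 1; rewrite e1 /L => -> /=; rewrite mulr1 addrK.
have phiL : forall x, lin_span S x -> phi x = (L x + p0)%:E.
  by move=> x hx; have := affL x hx 1; rewrite e1 mulr1.
have Llin : forall a x z, lin_span S x -> lin_span S z ->
    L (fun t => a * x t + z t) = a * L x + L z.
  move=> a x z hx hz.
  have := comb_aff a x z (L x) (L z) (spanX _ hx) (spanX _ hz) (affL _ hx) (affL _ hz) 1.
  by rewrite e1 mulr1 /L => -> /=; rewrite addrK.
have L0 : L (fun=> 0) = 0 by rewrite /L -/phi0 ephi0 /= subrr.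
pose small (F : seq (T -> R)) (k : nat) (x : T -> R) :=
  forall Y, List.In Y F -> Xs Y -> `|Ex P (fun t => x t * Y t)| < k.+1%:R^-1.
have [F [k HF]] : exists F k, forall x, lin_span S x -> small F k x -> -1 < L x.
  apply: contrapT => Hneg.
  have H1 : forall i : (seq (T -> R) * nat),
      exists x, [/\ lin_span S x, small i.1 i.2 x & L x <= -1].
    move=> [F k]; apply: contrapT => hno; apply: Hneg; exists F, k => x sx sm.
    rewrite ltNge; apply/negP => hle; apply: hno; by exists x.
  have [xf Hxf] := choice H1.
  pose le (i j : seq (T -> R) * nat) :=
    (forall Y, List.In Y i.1 -> List.In Y j.1) /\ (i.2 <= j.2)%N.
  have dle : directed le.
    split.
    - exact: (inhabits ([::], 0%N)).
    - by move=> i; split.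
    - move=> i j k' [h1 h2] [h3 h4]; split; [by move=> Y /h1 /h3 | exact: leq_trans h4].
    - move=> i j; exists (i.1 ++ j.1, maxn i.2 j.2); split; split => /=.
      + by move=> Y hY; apply: List.in_or_app; left.
      + exact: leq_maxl.
      + by move=> Y hY; apply: List.in_or_app; right.
      + exact: leq_maxr.
  have cv0 : weak_net_cvg P Xs le xf (fun=> 0).
    move=> Y XsY e e0.
    exists ([:: Y], Num.truncn e^-1) => i [hi1 hi2].
    rewrite (_ : (fun t => 0 * Y t) = fun=> 0); last first.
      by apply: funext => t; rewrite mul0r.
    rewrite Ex0 subr0.
    have [_ sm _] := Hxf i.
    apply: lt_le_trans (sm Y (hi1 Y (or_introl erefl)) XsY) _.
    apply: (@le_trans _ _ (Num.truncn e^-1).+1%:R^-1).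
      by rewrite lef_pV2 ?posrE ?ltr0n // ler_nat ltnS.
    rewrite invf_ple ?posrE ?ltr0n //; apply: ltW; exact: truncnS_gt.
  have := lsc _ le xf (fun=> 0) dle (fun i => let: And3 h _ _ := Hxf i in spanX _ h) X0 cv0.
  have ub : forall i, (phi (xf i) <= (p0 - 1)%:E)%E.
    by move=> i; have [sx _ hL] := Hxf i; rewrite phiL // lee_fin; lra.
  move=> h; have [_ refl _ _] := dle.
  have := le_trans h (@liminf_le_ub R _ le _ _ refl ub).
  rewrite -/phi0 ephi0 lee_fin; lra.
pose F' := map (fun Y => if `[< Xs Y >] then Y else (fun=> 0)) F.
pose G i := nth (fun=> 0) F' i.
have XsG : forall i, Xs (G i).
  move=> i; rewrite /G; case: (ltnP i (size F)) => hi.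
    rewrite (nth_map (fun=> 0)) //; case: asboolP => //.
  by rewrite nth_default // size_map.
have intp : forall x Y, X x -> Xs Y ->
    P.-integrable setT (EFin \o (fun t => x t * Y t)).
  by move=> x Y Xx XsY; case: (Lprod _ _ Xx XsY).
pose fs i (x : T -> R) := Ex P (fun t => x t * G i t).
have Hker : forall x, lin_span S x ->
    (forall i, (i < size F)%N -> fs i x = 0) -> L x = 0.
  move=> x sx H0.
  have key : forall tt, -1 < tt * L x.
    move=> tt.
    have sx' := spanc tt x (fun=> 0) sx (lin_span0 S).
    have h := HF _ sx'; rewrite (Llin _ _ _ sx (lin_span0 S)) L0 addr0 in h.
    apply: h.
    move=> Y inY XsY.
    have [i [hi hY]] := @In_nth_ex _ (fun=> 0) _ _ inY.
    have eY : G i = Y.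
      by rewrite /G (nth_map (fun=> 0)) // hY; case: asboolP.
    rewrite (_ : (fun t => (tt * x t + 0) * Y t) = fun t => tt * (x t * Y t)); last first.
      by apply: funext => t; rewrite addr0 mulrA.
    rewrite Ex_scale; last exact: intp (spanX _ sx) XsY.
    have := H0 i hi; rewrite /fs eY => ->.
    by rewrite mulr0 normr0 invr_gt0 ltr0n.
  apply/eqP; apply/negPn/negP => nz.
  have := key (-2 / L x); rewrite divfK //; lra.
have Hfs : forall i, lin_on R (T -> R) (fun=> 0) (fun a x z t => a * x t + z t) (lin_span S) (fs i).
  move=> i; split.
    rewrite /fs (_ : (fun t => 0 * G i t) = fun=> 0) ?Ex0 //.
    by apply: funext => t; rewrite mul0r.
  move=> a x z sx sz; rewrite /fs.
  rewrite (_ : (fun t => (a * x t + z t) * G i t) =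
     fun t => a * (x t * G i t) + z t * G i t); last first.
    by apply: funext => t; rewrite mulrDl mulrA.
  by rewrite Ex_lin //; apply: intp => //; apply: spanX.
have HL : lin_on R (T -> R) (fun=> 0) (fun a x z t => a * x t + z t) (lin_span S) L.
  rewrite /lin_on; split; first exact: L0.
  move=> a x z sx sz; exact: (Llin a x z sx sz).
have [c Hc] := @linalg R (T -> R) (fun=> 0) (fun a x z t => a * x t + z t)
  (size F) fs (lin_span S) L (lin_span0 S) spanc Hfs HL Hker.
pose Y := fun t => \sum_(i < size F) c i * G i t.
have XsY : Xs Y by exact: (sum_in Xs G c (size F) VXs XsG).
have LY : forall x, lin_span S x -> L x = Ex P (fun t => x t * Y t).
  move=> x sx; rewrite Hc // /Y Ex_sum //.
    by move=> i; apply: intp => //; apply: spanX.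
  by move=> m'; apply: intp; [apply: spanX | exact: (sum_in Xs G c m' VXs XsG)].
have ExN : forall Z, X Z ->
    Ex P (fun t => (-1 * Z t) * Y t) = - Ex P (fun t => Z t * Y t).
  move=> Z XZ'; rewrite (_ : (fun t => _) = fun t => -1 * (Z t * Y t)); last first.
    by apply: funext => t; rewrite mulrA.
  by rewrite Ex_scale ?mulN1r //; apply: intp.
have sh : forall a b : R, a + p0 - (b + p0) = a - b by move=> *; ring.
have upZ : forall Z, X Z -> (phi Z <= (Ex P (fun t => Z t * Y t) + p0)%:E)%E.
  move=> Z XZ'; have [I [le [x [dle hx cvx']]]] := dense Z XZ'.
  apply: le_trans (lsc _ le x Z dle (fun i => spanX _ (hx i)) XZ' cvx') _.
  rewrite (_ : (fun i => phi (x i)) =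
     fun i => (Ex P (fun t => x i t * Y t) + p0)%:E); last first.
    by apply: funext => i; rewrite phiL // LY.
  apply: liminf_le_cvg => // e e0.
  have [i0 Hi0] := cvx' Y XsY e e0.
  by exists i0 => i hi; rewrite sh; apply: Hi0.
have reprZ : forall Z, X Z -> phi Z = (Ex P (fun t => Z t * Y t) + p0)%:E.
  move=> Z XZ'.
  have XnZ : X (fun t => -1 * Z t) by apply: XZ.
  have h1 := upZ Z XZ'; have h2 := upZ _ XnZ; rewrite ExN // in h2.
  have := cvx _ _ _ XZ' XnZ half01.
  rewrite (_ : (fun t => 2^-1 * Z t + (1 - 2^-1) * (-1 * Z t)) = fun=> 0);
    last by apply: funext => t; field.
  rewrite -/phi0 ephi0.
  case E1: (phi Z) h1 => [r| |] h1; last first.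
  - by move: (phiN _ XZ'); rewrite E1.
  - by [].
  case E2: (phi (fun t => -1 * Z t)) h2 => [s| |] h2; last first.
  - by move: (phiN _ XnZ); rewrite E2.
  - by [].
  rewrite -!EFinM -EFinD !lee_fin => H.
  move: h1 h2; rewrite !lee_fin => h1 h2.
  congr EFin; apply/eqP; rewrite eq_le h1 /=; lra.
split.
  split; first by move=> Z XZ'; rewrite reprZ.
  move=> Z Z' a b XZ' XZ''.
  have XbZ' : X (fun t => b * Z' t) by apply: XZ.
  rewrite reprZ; last by apply: Xc.
  rewrite !reprZ //= -/phi0 -/p0.
  rewrite (_ : (fun t => (a * Z t + b * Z' t) * Y t) =
      fun t => a * (Z t * Y t) + (b * Z' t) * Y t); last first.
    by apply: funext => t; ring.
  rewrite Ex_lin ?intp //.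
  rewrite (_ : (fun t => (b * Z' t) * Y t) = fun t => b * (Z' t * Y t)); last first.
    by apply: funext => t; ring.
  rewrite Ex_scale ?intp //.
  rewrite (_ : (fun t => 0 * Y t) = fun=> 0) ?Ex0; last first.
    by apply: funext => t; rewrite mul0r.
  ring.
exists Y => //; split => //.
move=> Y' XsY' rep'.
have eqE : forall Z, X Z ->
    Ex P (fun t => Z t * Y' t) = Ex P (fun t => Z t * Y t).
  move=> Z XZ'; have := rep' Z XZ'; rewrite reprZ // => h.
  have := EFin_inj h; lra.
have XsW : Xs (fun t => Y' t - Y t).
  rewrite (_ : (fun t => _) = fun t => Y' t + (-1 * Y t)).
    by apply: XsD => //; apply: XsZ.
  by apply: funext => t; ring.
have := orth0 P _ (XsL1 _ XsW).
have H : forall Z, Linf P Z -> Ex P (fun t => Z t * (Y' t - Y t)) = 0.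
  move=> Z LZ; have XZ' := LinfX _ LZ.
  rewrite (_ : (fun t => _) = fun t => -1 * (Z t * Y t) + Z t * Y' t); last first.
    by apply: funext => t; ring.
  by rewrite Ex_lin ?intp // eqE // mulN1r addNr.
move=> /(_ H); apply: filterS => t /= /eqP; by rewrite subr_eq0 => /eqP.
Qed.
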